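(* For all integers $n\ge2$ and $d$, the $(n-1)\times(n-1)$ matrix $P(n,d)=\bigl(p_{n,d}(i,j)\bigr)_{i,j=1}^{n-1}$ is symmetric and Toeplitz, i.e. $p_{n,d}(i,j)=p_{n,d}(j,i)$ for all $i,j\in[n-1]$ and $p_{n,d}(i+1,j+1)=p_{n,d}(i,j)$ for all $i,j\in[n-2]$.
   Context: A cycle $(c_1c_2\cdots c_k)$ of a permutation means $c_1\mapsto c_2\mapsto\cdots\mapsto c_k\mapsto c_1$. Its cyclic descent number is $\operatorname{cdes}(c)=\lvert\{t\in[k]: c_t>c_{t+1}\}\rvert$ and its cyclic ascent number $\operatorname{casc}(c)=\lvert\{t\in[k]: c_t<c_{t+1}\}\rvert$, where $c_{k+1}=c_1$; its cyclic weight is $w(c)=\min(\operatorname{cdes}(c),\operatorname{casc}(c))$, and the cyclic weight $w(\pi)$ of a permutation $\pi$ is the sum of the cyclic weights of all its cycles. An odd order permutation is one all of whose cycles have odd length. $\mathscr{P}_{n,d}$ is the set of odd order permutations of $[n]$ with cyclic weight $d$, and $p_{n,d}(i,j)$ is the number of $\pi\in\mathscr{P}_{n,d}$ containing $i\,n\,j$ as a cyclic factor, i.e. some cycle of $\pi$, written starting at a suitable element, contains $i,n,j$ consecutively (equivalently $\pi(i)=n$ and $\pi(n)=j$). *)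

(* Defs.v *)
From mathcomp Require Import all_boot all_order all_fingroup all_algebra.
Set Implicit Arguments. Unset Strict Implicit. Unset Printing Implicit Defensive.

(* Permutations of [n] = {1,..,n} are modelled as {perm 'I_n}; the ordinal
   with value k represents the element k+1 of [n].  The order on 'I_n is the
   order on labels. *)

Definition cdes n (s : {perm 'I_n}) (C : {set 'I_n}) : nat :=
  #|[set x in C | s x < x]|.
Definition casc n (s : {perm 'I_n}) (C : {set 'I_n}) : nat :=
  #|[set x in C | x < s x]|.

Definition cyc_weight n (s : {perm 'I_n}) (C : {set 'I_n}) : nat :=
  minn (cdes s C) (casc s C).

Definition perm_cweight n (s : {perm 'I_n}) : nat :=
  \sum_(C in porbits s) cyc_weight s C.

Definition odd_order n (s : {perm 'I_n}) : bool :=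
  [forall C in porbits s, odd #|C|].

Definition p_nd (n : nat) (d : int) (i j : nat) : nat :=
  #|[set s : {perm 'I_n} |
      [&& odd_order s, Posz (perm_cweight s) == d,
          [forall x, (val x == i.-1) ==> (val (s x) == n.-1)]
        & [forall x, (val x == n.-1) ==> (val (s x) == j.-1)]]]|.

(* Main.v *)
Require Import Defs.
From mathcomp Require Import all_boot all_order all_fingroup all_algebra.
From mathcomp Require Import zify.

Lemma transport n (s s' : {perm 'I_n}) (F : {set 'I_n} -> {set 'I_n}) :
  injective F -> porbits s' = F @: porbits s ->
  (forall C, C \in porbits s -> #|F C| = #|C| /\ cyc_weight s' (F C) = cyc_weight s C) ->
  odd_order s' = odd_order s /\ perm_cweight s' = perm_cweight s.
Proof.
move=> Finj Ep H; split.
- rewrite /odd_order Ep; apply/forall_inP/forall_inP => h C CP.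
  + by rewrite -(H C CP).1; apply: h; apply: imset_f.
  + by case/imsetP: CP => C0 C0P ->; rewrite (H _ C0P).1; apply: h.
- rewrite /perm_cweight Ep big_imset /=; last by move=> x y _ _; apply: Finj.
  by apply: eq_bigr => C CP; rewrite (H C CP).2.
Qed.

Lemma porbit_conj (T : finType) (s t : {perm T}) x :
  porbit (s ^ t)%g (t x) = t @: porbit s x.
Proof.
apply/setP => y; apply/porbitP/imsetP.
- case=> i ->; exists ((s ^+ i)%g x); first exact: mem_porbit.
  by rewrite -conjXg permJ.
- case=> z /porbitP [i ->] ->; exists i.
  by rewrite -conjXg permJ.
Qed.

Lemma porbits_conj (T : finType) (s t : {perm T}) :
  porbits (s ^ t)%g = (fun C : {set T} => t @: C) @: porbits s.
Proof.
apply/setP => C; rewrite /porbits.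
apply/imsetP/imsetP => [[y _ ->] | [C0 /imsetP [x _ ->] ->]].
- by exists (porbit s (t^-1 y)%g); [apply: imset_f | rewrite -porbit_conj permKV].
- by exists (t x) => //; rewrite porbit_conj.
Qed.

Lemma mem_porbit_s (T : finType) (s : {perm T}) x y :
  (s x \in porbit s y) = (x \in porbit s y).
Proof.
by rewrite -!eq_porbit_mem -[in LHS](expg1 s) porbit_perm.
Qed.

Lemma cdesV n (s : {perm 'I_n}) C : C \in porbits s -> cdes s^-1 C = casc s C.
Proof.
case/imsetP => y _ ->; rewrite /cdes /casc -(card_preimset _ (@perm_inj _ s)).
by apply: eq_card => x; rewrite !inE permK mem_porbit_s.
Qed.

Lemma cascV n (s : {perm 'I_n}) C : C \in porbits s -> casc s^-1 C = cdes s C.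
Proof.
case/imsetP => y _ ->; rewrite /cdes /casc -(card_preimset _ (@perm_inj _ s)).
by apply: eq_card => x; rewrite !inE permK mem_porbit_s.
Qed.

Lemma condE k (s : {perm 'I_k.+1}) a b : a < k.+1 ->
  [forall x : 'I_k.+1, (nat_of_ord x == a) ==> (nat_of_ord (s x) == b)] = (nat_of_ord (s (inord a)) == b).
Proof.
move=> ha; apply/forallP/idP => [h | h x].
  by have := h (inord a); rewrite /= inordK // eqxx.
apply/implyP => /eqP hx; have -> : x = inord a by apply: val_inj; rewrite /= inordK.
exact: h.
Qed.

Lemma condV k (s : {perm 'I_k.+1}) a b : a < k.+1 -> b < k.+1 ->
  (nat_of_ord ((s^-1)%g (inord a)) == b) = (nat_of_ord (s (inord b)) == a).
Proof.
move=> ha hb; apply/eqP/eqP => h.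
  have -> : (inord b : 'I_k.+1) = (s^-1)%g (inord a) by apply: val_inj; rewrite /= h inordK.
  by rewrite permKV /= inordK.
have -> : (inord a : 'I_k.+1) = s (inord b) by apply: val_inj; rewrite /= h inordK.
by rewrite permK /= inordK.
Qed.

Lemma weightV n (s : {perm 'I_n}) :
  odd_order s^-1 = odd_order s /\ perm_cweight s^-1 = perm_cweight s.
Proof.
apply: (@transport _ _ _ id) => //; first by rewrite porbitsV imset_id.
move=> C CP; split => //; by rewrite /cyc_weight cdesV // cascV // minnC.
Qed.

Lemma symm k (d : int) i j : 1 <= i <= k.+1 -> 1 <= j <= k.+1 ->
  p_nd k.+2 d i j = p_nd k.+2 d j i.
Proof.
move=> hi hj; rewrite /p_nd -[RHS](card_preimset _ (@invg_inj _)).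
apply: eq_card => s; rewrite !inE /=.
have [h1 h2] := weightV _ s; rewrite h1 h2.
rewrite !condE; try lia.
rewrite condV; try lia. rewrite condV; try lia.
Qed.

Definition sf (k x : nat) := if x < k then x.+1 else if x == k then 0 else x.

Lemma sf_cases k a : a < k.+2 ->
  (a < k /\ sf k a = a.+1) \/ (a = k /\ sf k a = 0) \/ (a = k.+1 /\ sf k a = k.+1).
Proof.
rewrite /sf => ha; case: ltnP => h1; first by left.
case: eqP => h2; first by right; left.
by right; right; split => //; lia.
Qed.

Lemma sf_lt k (x : 'I_k.+2) : sf k x < k.+2.
Proof. have := ltn_ord x; case/sf_cases => [[? ->]|[[? ->]|[? ->]]]; lia. Qed.

Definition sig_fun k (x : 'I_k.+2) : 'I_k.+2 := Ordinal (@sf_lt k x).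

Lemma sig_inj k : injective (@sig_fun k).
Proof.
move=> x y /(congr1 val) /= h; apply: val_inj => /=.
have := ltn_ord x; have := ltn_ord y.
case/sf_cases => [[? hy]|[[? hy]|[? hy]]]; case/sf_cases => [[? hx]|[[? hx]|[? hx]]];
 rewrite hx hy in h; lia.
Qed.

Definition sig k : {perm 'I_k.+2} := perm (@sig_inj k).

Lemma sigE k x : nat_of_ord (sig k x) = sf k x.
Proof. by rewrite permE. Qed.

Lemma key k (s : {perm 'I_k.+2}) x :
  nat_of_ord (s (inord k)) != k.+1 -> nat_of_ord (s (inord k.+1)) != k ->
  let m : 'I_k.+2 := inord k in
  let t := tperm m ((s^-1)%g m) in
  ((sf k (s x) < sf k x) = (s (t x) < t x)) /\
  ((sf k x < sf k (s x)) = (t x < s (t x))).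
Proof.
move=> h1 h2 m t.
have vm : nat_of_ord m = k by rewrite /m inordK.
have spm : s ((s^-1)%g m) = m by rewrite permKV.
have hm2 : nat_of_ord (s m) != k.+1 by [].
have hmx : s (inord k.+1) != m.
  by apply/eqP => e; move: h2; rewrite e vm eqxx.
have ltx := ltn_ord x; have ltsx := ltn_ord (s x).
have ltp := ltn_ord ((s^-1)%g m); have ltsm := ltn_ord (s m).
have facts : s m != m -> [/\ nat_of_ord ((s^-1)%g m) != k.+1, nat_of_ord (s m) != k &
     nat_of_ord ((s^-1)%g m) != k].
  move=> hsm.
  have pnm : (s^-1)%g m != m by apply: contra hsm => /eqP e; rewrite -{1}e spm.
  split.
  - apply/eqP => e; move: hmx; rewrite -spm; have -> : (inord k.+1 : 'I_k.+2) = (s^-1)%g m.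
      by apply: val_inj; rewrite /= inordK // e.
    by rewrite eqxx.
  - by apply: contra hsm => e; apply/eqP/val_inj; rewrite /= vm; apply/eqP.
  - by apply: contra pnm => e; apply/eqP/val_inj; rewrite /= vm; apply/eqP.
rewrite /t; case: tpermP => [->|->|hxm hxp].
- rewrite spm.
  case: (eqVneq (s m) m) => hsm.
    have hp : (s^-1)%g m = m by rewrite -{1}hsm permK.
    by rewrite hsm hp !ltnn.
  have [pnmx vsm vp] := facts hsm.
  move: (@sf_cases k _ ltsm) (@sf_cases k _ (ltn_ord m)); rewrite vm.
  case => [[? ->]|[[? ->]|[? ->]]]; case => [[? ->]|[[? ->]|[? ->]]]; split; apply/idP/idP; lia.
- rewrite spm.
  case: (eqVneq (s m) m) => hsm.
    have hp : (s^-1)%g m = m by rewrite -{1}hsm permK.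
    by rewrite hsm hp !ltnn.
  have [pnmx vsm vp] := facts hsm.
  move: (@sf_cases k _ ltp) (@sf_cases k _ (ltn_ord m)); rewrite vm.
  case => [[? ->]|[[? ->]|[? ->]]]; case => [[? ->]|[[? ->]|[? ->]]]; split; apply/idP/idP; lia.
- have vx : nat_of_ord x != k.
    by apply/eqP => e; apply: hxm; apply/val_inj; rewrite /= vm.
  have hsx : s x != m by apply/eqP => e; apply: hxp; rewrite -e permK.
  have vsx : nat_of_ord (s x) != k.
    by apply: contra hsx => e; apply/eqP/val_inj; rewrite /= vm; apply/eqP.
  move: (@sf_cases k _ ltx) (@sf_cases k _ ltsx).
  case => [[? ->]|[[? ->]|[? ->]]]; case => [[? ->]|[[? ->]|[? ->]]]; split; apply/idP/idP; lia.
Qed.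

Lemma tau_mem k (s : {perm 'I_k.+2}) C x : C \in porbits s ->
  (tperm (inord k) ((s^-1)%g (inord k)) x \in C) = (x \in C).
Proof.
case/imsetP => y _ ->; case: tpermP => [->|->|//].
- by rewrite -{2}(permKV s (inord k)) mem_porbit_s.
- by rewrite -{1}(permKV s (inord k)) mem_porbit_s.
Qed.

Lemma weight_conj k (s : {perm 'I_k.+2}) :
  nat_of_ord (s (inord k)) != k.+1 -> nat_of_ord (s (inord k.+1)) != k ->
  odd_order (s ^ sig k)%g = odd_order s /\ perm_cweight (s ^ sig k)%g = perm_cweight s.
Proof.
move=> h1 h2.
apply: (@transport _ _ _ (fun C => sig k @: C)).
- exact: imset_inj perm_inj.
- exact: porbits_conj.
move=> C CP; split; first by rewrite card_imset //; exact: perm_inj.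
rewrite /cyc_weight; congr minn.
- rewrite /cdes -(card_preimset _ (@perm_inj _ (sig k))).
  rewrite -[RHS](card_preimset _ (@perm_inj _ (tperm (inord k) ((s^-1)%g (inord k))))).
  apply: eq_card => x; rewrite !inE mem_imset ?permJ; last exact: perm_inj.
  by rewrite !sigE (@key k s x h1 h2).1 tau_mem.
- rewrite /casc -(card_preimset _ (@perm_inj _ (sig k))).
  rewrite -[RHS](card_preimset _ (@perm_inj _ (tperm (inord k) ((s^-1)%g (inord k))))).
  apply: eq_card => x; rewrite !inE mem_imset ?permJ; last exact: perm_inj.
  by rewrite !sigE (@key k s x h1 h2).2 tau_mem.
Qed.

Lemma toep k (d : int) i j : 1 <= i <= k -> 1 <= j <= k ->
  p_nd k.+2 d i.+1 j.+1 = p_nd k.+2 d i j.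
Proof.
move=> hi hj; rewrite /p_nd -[LHS](card_preimset _ (@conjg_inj _ (sig k))).
apply: eq_card => s; rewrite !inE /=.
rewrite !condE; try lia.
have e1 : sig k (inord i.-1) = inord i.
  apply: val_inj; rewrite /= sigE !inordK; try lia.
  have : i.-1 < k.+2 by lia.
  case/(@sf_cases k) => [[? ->]|[[? ->]|[? ->]]]; lia.
have e2 : sig k (inord k.+1) = inord k.+1.
  apply: val_inj; rewrite /= sigE !inordK //.
  have : k.+1 < k.+2 by lia.
  case/(@sf_cases k) => [[? ->]|[[? ->]|[? ->]]]; lia.
have c1 : (nat_of_ord ((s ^ sig k)%g (inord i)) == k.+1) = (nat_of_ord (s (inord i.-1)) == k.+1).
  rewrite -e1 permJ sigE.
  move: (@sf_cases k _ (ltn_ord (s (inord i.-1)))) => cs.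
  apply/eqP/eqP; lia.
have c2 : (nat_of_ord ((s ^ sig k)%g (inord k.+1)) == j) = (nat_of_ord (s (inord k.+1)) == j.-1).
  rewrite -{1}e2 permJ sigE.
  move: (@sf_cases k _ (ltn_ord (s (inord k.+1)))) => cs.
  apply/eqP/eqP; lia.
rewrite c1 c2.
case H1: (nat_of_ord (s (inord i.-1)) == k.+1); last by rewrite !andbF.
case H2: (nat_of_ord (s (inord k.+1)) == j.-1); last by rewrite !andbF.
have h1 : nat_of_ord (s (inord k)) != k.+1.
  apply/eqP => e.
  have : s (inord k) = s (inord i.-1) by apply: val_inj; rewrite /= e; apply/esym/eqP.
  move/perm_inj/(congr1 val) => /=; rewrite !inordK; lia.
have h2 : nat_of_ord (s (inord k.+1)) != k by rewrite (eqP H2); lia.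
by have [-> ->] := @weight_conj k s h1 h2.
Qed.

Theorem theorem3p2 (n : nat) (d : int) : 2 <= n ->
  (forall i j : nat, 1 <= i <= n.-1 -> 1 <= j <= n.-1 ->
     p_nd n d i j = p_nd n d j i) /\
  (forall i j : nat, 1 <= i <= n - 2 -> 1 <= j <= n - 2 ->
     p_nd n d i.+1 j.+1 = p_nd n d i j).
Proof.
case: n => [|[|k]] // _.
split => i j hi hj; [apply: symm | apply: toep]; lia.
Qed.
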